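(* Let $p>5$ be a prime, $q=p^h$, and let $\mathcal{F}$ be the projective closure of $ax^n+by^m=1$ over $\mathbb{F}_q$, with $a,b\in\mathbb{F}_q^*$ and $m,n$ positive integers with $n\ge m>2$. If $p\mid(n-1)$ and $p\mid(m-2)$, then $\mathcal{F}$ is $\mathbb{F}_q$-Frobenius classical with respect to conics.
   Context: With $\varphi_0,\dots,\varphi_5$ the monomials of degree 2 in $x,y,1$, $\tau$ separating and $D^{(k)}_\tau$ Hasse derivatives, the $\mathbb{F}_q$-Frobenius order sequence w.r.t. conics is the lexicographically smallest $\nu_0<\dots<\nu_4$ such that the $6\times6$ determinant with first row $(\varphi_j^q)_j$ and rows $(D^{(\nu_i)}_\tau\varphi_j)_j$ is nonzero; the curve is $\mathbb{F}_q$-Frobenius classical w.r.t. conics if $\nu_i=i$ for all $i$. *)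

(* Defs.v *)
From HB Require Import structures.
From mathcomp Require Import all_boot all_order all_algebra all_field.
Set Implicit Arguments. Unset Strict Implicit. Unset Printing Implicit Defensive.
Import Order.TTheory GRing.Theory.
Local Open Scope ring_scope.

Definition conic_mon (R : comNzRingType) (j : nat) (u v : R) : R :=
  match j with
  | 0 => u ^+ 2 | 1 => u * v | 2 => v ^+ 2 | 3 => u | 4 => v | _ => 1
  end.

(* Hasse derivatives w.r.t. the separating variable tau = x are encoded by the
   Taylor expansion  f(x + t, Y(t)) = sum_k D^(k)_x f * t^k  in L[[t]], where
   Y(t) = sum_k (D^(k)_x y) t^k.  The coefficient of t^k only depends on the
   coefficients Y 0 .. Y k, so we compute it with the truncation of Y. *)
Definition hasse_mon (L : fieldType) (x : L) (Y : nat -> L) (j k : nat) : L :=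
  (conic_mon j ('X + x%:P) (\poly_(i < k.+1) Y i))`_k.

(* Y is the Taylor expansion of y along x for the curve a x^n + b y^m = 1,
   i.e. Y k = D^(k)_x y: Y 0 = y and a (x+t)^n + b Y(t)^m = 1 in L[[t]]. *)
Definition hasse_expansion (L : fieldType) (A B : L) (n m : nat)
    (x y : L) (Y : nat -> L) : Prop :=
  Y 0 = y /\
  forall k : nat,
    (A%:P * ('X + x%:P) ^+ n + B%:P * (\poly_(i < k.+1) Y i) ^+ m)`_k
      = (k == 0)%:R.

Definition frob_conic_mx (L : fieldType) (q : nat) (x y : L) (Y : nat -> L)
    (nu : seq nat) : 'M[L]_6 :=
  \matrix_(i < 6, j < 6)
    (if (i : nat) == 0 then (conic_mon j x y) ^+ q
     else hasse_mon x Y j (nth 0 nu i.-1)).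

Definition lex_lt5 (s t : seq nat) : Prop :=
  exists2 i : nat, (i < 5)%N &
    (forall j : nat, (j < i)%N -> nth 0 s j = nth 0 t j) /\
    (nth 0 s i < nth 0 t i)%N.

Definition is_frob_conic_order_seq (L : fieldType) (q : nat) (x y : L)
    (Y : nat -> L) (nu : seq nat) : Prop :=
  [/\ size nu = 5%N, sorted ltn nu,
      \det (frob_conic_mx q x y Y nu) != 0 &
      forall nu' : seq nat, size nu' = 5%N -> sorted ltn nu' -> lex_lt5 nu' nu ->
        \det (frob_conic_mx q x y Y nu') = 0].

Definition frob_classical_conics (L : fieldType) (q : nat) (x y : L)
    (Y : nat -> L) : Prop :=
  is_frob_conic_order_seq q x y Y [:: 0%N; 1%N; 2%N; 3%N; 4%N].

(* Main.v *)
Require Import Defs.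
From HB Require Import structures.
From mathcomp Require Import all_boot all_order all_algebra all_field.
Import GRing.Theory.
Local Open Scope ring_scope.
From mathcomp Require Import ring zify.

Section Low.
Variable L : fieldType.

Definition lowEq (k : nat) (P Q : {poly L}) := forall i, (i <= k)%N -> P`_i = Q`_i.

Lemma lowEqD k P P' Q Q' : lowEq k P P' -> lowEq k Q Q' -> lowEq k (P + Q) (P' + Q').
Proof. by move=> h1 h2 i hi; rewrite !coefD h1 ?h2. Qed.

Lemma lowEqM k P P' Q Q' : lowEq k P P' -> lowEq k Q Q' -> lowEq k (P * Q) (P' * Q').
Proof.
move=> h1 h2 i hi; rewrite !coefM; apply: eq_bigr => j _.
rewrite h1 ?h2 //; last by apply: leq_trans hi; rewrite -ltnS.
by apply: leq_trans hi; rewrite leq_subr.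
Qed.

Lemma lowEqX k P P' e : lowEq k P P' -> lowEq k (P ^+ e) (P' ^+ e).
Proof.
move=> h; elim: e => [|e IH]; first by move=> i _.
by rewrite !exprS; apply: lowEqM.
Qed.

Lemma lowEq_refl k P : lowEq k P P. Proof. by []. Qed.

Lemma frob_low p k (P : {poly L}) : p \in [pchar L] -> (k < p)%N ->
  lowEq k (P ^+ p) ((P`_0 ^+ p)%:P).
Proof.
move=> hp hk.
have hpP : p \in [pchar {poly L}] by rewrite pchar_poly.
have := poly_take_drop 1 P => E.
rewrite -{1}E exprDn_pchar; last first.
  by rewrite pnatE //; case/andP: hp.
rewrite exprMn -exprM mul1n.
have -> : take_poly 1 P = (P`_0)%:P.
  apply/polyP => i; rewrite coef_take_poly coefC; case: i => //.
rewrite -rmorphXn /=.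
move=> i hi; rewrite coefD (coefMXn) ifT ?addr0 //.
exact: leq_ltn_trans hi hk.
Qed.
End Low.
Arguments lowEq {L} k P Q. Arguments frob_low {L} p k P. Arguments lowEqM {L} k P P' Q Q'. Arguments lowEqX {L} k P P' e. Arguments lowEqD {L} k P P' Q Q'.


Lemma key (L : fieldType) p (A B x y : L) (Y : nat -> L) n m k :
  p \in [pchar L] -> (k < p)%N -> (p %| n - 1)%N -> (p %| m - 2)%N ->
  (0 < n)%N -> (1 < m)%N -> Y 0%N = y ->
  (A%:P * ('X + x%:P) ^+ n + B%:P * (\poly_(i < k.+1) Y i) ^+ m)`_k =
  A * x ^+ (n - 1) * ('X + x%:P)`_k + B * y ^+ (m - 2) * ((\poly_(i < k.+1) Y i) ^+ 2)`_k.
Proof.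
move=> hp hk /dvdnP [s hs] /dvdnP [r hr] hn hm hY.
set T := \poly_(i < k.+1) Y i.
have eN : n = (1 + p * s)%N by rewrite mulnC -hs subnKC.
have eM : m = (2 + p * r)%N by rewrite mulnC -hr subnKC.
rewrite [LHS]coefD !coefCM.
have h1 : lowEq k (('X + x%:P) ^+ n) (('X + x%:P) * (x ^+ (n - 1))%:P).
  rewrite eN exprD expr1 exprM addKn exprM.
  apply: lowEqM => //; rewrite rmorphXn /=.
  apply: lowEqX; have := frob_low _ _ ('X + x%:P) hp hk.
  by rewrite coefD coefX coefC /= add0r.
have h2 : lowEq k (T ^+ m) (T ^+ 2 * (y ^+ (m - 2))%:P).
  rewrite eM exprD addKn !exprM.
  apply: lowEqM => //; rewrite rmorphXn /=.
  apply: lowEqX; have := frob_low _ _ T hp hk.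
  by rewrite coef_poly /= hY.
rewrite h1 // h2 // !coefMC; ring.
Qed.


Lemma size_1subX (F : fieldType) (a : F) N : a != 0 -> (0 < N)%N ->
  size (1 - a *: 'X^N : {poly F}) = N.+1.
Proof.
move=> ha hN; rewrite addrC size_addl size_opp size_scale // size_polyXn //.
by rewrite size_poly1.
Qed.

Section NonOsc.
Variables (F : finFieldType) (L : fieldType) (iota : {rmorphism F -> L}).
Variables (n m q : nat) (a b : F) (x y : L).
Hypotheses (hq : (1 < q)%N) (ha : a != 0) (hb : b != 0) (hm : (2 < m)%N)
  (hmn : (m <= n)%N)
  (htr : forall P : {poly F}, P != 0 -> (map_poly iota P).[x] != 0)
  (hc : iota a * x ^+ n + iota b * y ^+ m = 1).


Lemma x_neq0 : x != 0.
Proof.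
have hX : ('X : {poly F}) != 0 by rewrite polyX_eq0.
by have := htr _ hX; rewrite map_polyX hornerX.
Qed.

Lemma y_neq0 : y != 0.
Proof.
apply/eqP => y0; move: hc; rewrite y0 expr0n /= (gtn_eqF (ltnW (ltnW hm))) mulr0 addr0 => hc'.
have hP : (a *: 'X^n - 1 : {poly F}) != 0.
  apply/eqP => /(congr1 (fun P : {poly F} => P`_0)).
  rewrite coefB coefZ coefXn coef1 /= eq_sym (gtn_eqF (leq_trans (ltnW (ltnW hm)) hmn)) coef0.
  by rewrite mulr0 sub0r => /eqP; rewrite oppr_eq0 oner_eq0.
have := htr _ hP; rewrite rmorphB /= rmorph1 map_polyZ map_polyXn.
by rewrite hornerE hornerZ hornerXn hornerN hornerC hc' subrr eqxx.
Qed.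

Lemma nonosc :
  iota b * y ^+ (m - 2) * (y ^+ 2) ^+ q + iota a * x ^+ (n - 1) * x ^+ q - 1 != 0.
Proof.
apply/eqP => h0.
set A := iota a; set B := iota b.
set D := 1 - A * x ^+ n.
set E := 1 - A * x ^+ (n + q - 1).
have eD : B * y ^+ m = D by rewrite /D -hc; ring.
have eE : B * y ^+ m * y ^+ (2 * q - 2) = E.
  have -> : B * y ^+ m * y ^+ (2 * q - 2) = B * y ^+ (m - 2) * (y ^+ 2) ^+ q.
    rewrite -!exprM -!mulrA -!exprD; congr (_ * y ^+ _); lia.
  rewrite /E; have -> : x ^+ (n + q - 1) = x ^+ (n - 1) * x ^+ q by rewrite -exprD; congr (x ^+ _); lia.
  by apply: subr0_eq; rewrite -h0; ring.
have key : B ^+ (2 * q - 2) * E ^+ m = D ^+ (m + (2 * q - 2)).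
  have eD' : D ^+ (2 * q - 2) = B ^+ (2 * q - 2) * y ^+ (m * (2 * q - 2)).
    by rewrite -eD exprMn exprM.
  rewrite -eE eD exprD eD' exprMn -exprM (mulnC m); ring.
pose P : {poly F} := (b ^+ (2 * q - 2)) *: (1 - a *: 'X^(n + q - 1)) ^+ m
                     - (1 - a *: 'X^n) ^+ (m + (2 * q - 2)).
have hP : P != 0.
  apply/eqP => /eqP; rewrite subr_eq0 => /eqP hPe.
  have := size_scale_leq (b ^+ (2 * q - 2)) ((1 - a *: 'X^(n + q - 1)) ^+ m).
  rewrite hPe.
  have s1 := size_exp (1 - a *: 'X^(n + q - 1)) m.
  have s2 := size_exp (1 - a *: 'X^n) (m + (2 * q - 2)).
  rewrite !size_1subX // in s1 s2; try lia.
  have p1 : (0 < size ((1 - a *: 'X^(n + q - 1)) ^+ m))%N.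
    by rewrite size_poly_gt0 expf_neq0 // -size_poly_gt0 size_1subX //; lia.
  have p2 : (0 < size ((1 - a *: 'X^n) ^+ (m + (2 * q - 2))))%N.
    by rewrite size_poly_gt0 expf_neq0 // -size_poly_gt0 size_1subX //; lia.
  move: s1 s2 p1 p2; set u := size _; set v := size _ => s1 s2 p1 p2.
  nia.
have := htr _ hP; rewrite /P rmorphB /= linearZ /= !rmorphXn /= !rmorphB /= !rmorph1.
rewrite !map_polyZ !map_polyXn !hornerE /= -/A -/B -/D -/E.
by rewrite key subrr eqxx.
Qed.
End NonOsc.


Lemma colsum (L : fieldType) q x y (Y : nat -> L) (v : 'rV[L]_6) (j : 'I_6) :
  (v *m frob_conic_mx q x y Y [:: 0%N; 1%N; 2%N; 3%N; 4%N]) 0 j =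
  v 0 (inord 0) * (conic_mon j x y) ^+ q +
  v 0 (inord 1) * hasse_mon x Y j 0 +
  v 0 (inord 2) * hasse_mon x Y j 1 +
  v 0 (inord 3) * hasse_mon x Y j 2 +
  v 0 (inord 4) * hasse_mon x Y j 3 +
  v 0 (inord 5) * hasse_mon x Y j 4.
Proof.
rewrite mxE !big_ord_recl big_ord0 addr0 !mxE /= !addrA.
by do ![congr (_ + _)]; congr (_ * _); congr (v 0 _); apply/val_inj; rewrite /= inordK.
Qed.


Section HM.
Variables (L : fieldType) (x : L) (Y : nat -> L).

Ltac hm := rewrite /hasse_mon /= ?expr2 ?coefM ?big_ord_recr ?big_ord0 /=
  ?coefD ?coefX ?coefC ?coef_poly ?coef1 /= ?coefD ?coefX ?coefC ?coef_poly /=; ring.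

Lemma hm0 : [/\ hasse_mon x Y 0 0 = x ^+ 2, hasse_mon x Y 0 1 = 2%:R * x,
  hasse_mon x Y 0 2 = 1, hasse_mon x Y 0 3 = 0 & hasse_mon x Y 0 4 = 0].
Proof. split; hm. Qed.
Lemma hm1 : [/\ hasse_mon x Y 1 0 = x * Y 0, hasse_mon x Y 1 1 = Y 0 + x * Y 1,
  hasse_mon x Y 1 2 = Y 1 + x * Y 2, hasse_mon x Y 1 3 = Y 2 + x * Y 3
  & hasse_mon x Y 1 4 = Y 3 + x * Y 4].
Proof. split; hm. Qed.
Lemma hm2 : [/\ hasse_mon x Y 2 0 = Y 0 ^+ 2, hasse_mon x Y 2 1 = 2%:R * Y 0 * Y 1,
  hasse_mon x Y 2 2 = 2%:R * Y 0 * Y 2 + Y 1 ^+ 2,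
  hasse_mon x Y 2 3 = 2%:R * Y 0 * Y 3 + 2%:R * Y 1 * Y 2
  & hasse_mon x Y 2 4 = 2%:R * Y 0 * Y 4 + 2%:R * Y 1 * Y 3 + Y 2 ^+ 2].
Proof. split; hm. Qed.
Lemma hm3 : [/\ hasse_mon x Y 3 0 = x, hasse_mon x Y 3 1 = 1,
  hasse_mon x Y 3 2 = 0, hasse_mon x Y 3 3 = 0 & hasse_mon x Y 3 4 = 0].
Proof. split; hm. Qed.
Lemma hm4 : [/\ hasse_mon x Y 4 0 = Y 0, hasse_mon x Y 4 1 = Y 1,
  hasse_mon x Y 4 2 = Y 2, hasse_mon x Y 4 3 = Y 3 & hasse_mon x Y 4 4 = Y 4].
Proof. split; hm. Qed.
Lemma hm5 : [/\ hasse_mon x Y 5 0 = 1, hasse_mon x Y 5 1 = 0,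
  hasse_mon x Y 5 2 = 0, hasse_mon x Y 5 3 = 0 & hasse_mon x Y 5 4 = 0].
Proof. split; hm. Qed.
End HM.


Ltac dd H := match type of H with ?X = ?Y => constr:(X - Y) end.

Lemma colsum' (L : fieldType) q x y (Y : nat -> L) (v : 'rV[L]_6) j (hj : (j < 6)%N) :
  (v *m frob_conic_mx q x y Y [:: 0%N; 1%N; 2%N; 3%N; 4%N]) 0 (Ordinal hj) =
  v 0 (inord 0) * (conic_mon j x y) ^+ q +
  v 0 (inord 1) * hasse_mon x Y j 0 +
  v 0 (inord 2) * hasse_mon x Y j 1 +
  v 0 (inord 3) * hasse_mon x Y j 2 +
  v 0 (inord 4) * hasse_mon x Y j 3 +
  v 0 (inord 5) * hasse_mon x Y j 4.
Proof. exact: colsum. Qed.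

Lemma lex_min (nu : seq nat) : size nu = 5%N -> sorted ltn nu ->
  ~ lex_lt5 nu [:: 0%N; 1%N; 2%N; 3%N; 4%N].
Proof.
case: nu => [|a [|b [|c [|d [|e [|]]]]]] //= _.
move=> /and4P [h1 h2 h3 /andP [h4 _]] [i hi [hj hlt]].
have j0 := hj 0%N; have j1 := hj 1%N; have j2 := hj 2%N; have j3 := hj 3%N.
move: hi hlt j0 j1 j2 j3; clear hj; case: i => [|[|[|[|[|i]]]]] //= _; lia.
Qed.

Theorem proposition3p16
  (p h : nat) (F : finFieldType) (L : fieldType) (iota : {rmorphism F -> L})
  (n m : nat) (a b : F) (x y : L) (Y : nat -> L) :
  prime p -> (5 < p)%N -> #|F| = (p ^ h)%N ->
  a != 0 -> b != 0 -> (2 < m)%N -> (m <= n)%N ->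
  (p %| n - 1)%N -> (p %| m - 2)%N ->
  (* x is transcendental over F_q, so F_q(x, y) is the function field *)
  (forall P : {poly F}, P != 0 -> (map_poly iota P).[x] != 0) ->
  iota a * x ^+ n + iota b * y ^+ m = 1 ->
  hasse_expansion (iota a) (iota b) n m x y Y ->
  frob_classical_conics (p ^ h)%N x y Y.
Proof.
move=> pp p5 hcard ha hb hm hmn hdn hdm htr hc [hY0 hexp].
have hq : (1 < p ^ h)%N by rewrite -hcard card_finNzRing_gt1.
have hpL : p \in [pchar L] := rmorph_pchar iota (card_finPcharP hcard pp).
have xn0 := @x_neq0 _ _ _ _ htr.
have yn0 := @y_neq0 _ _ _ _ _ _ _ _ _ hm hmn htr hc.
have N0 := @nonosc _ _ _ _ _ _ _ _ _ _ hq ha hb hm hmn htr hc.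
set q := (p ^ h)%N in hq N0 *.
set A := iota a in hc N0 hexp *; set B := iota b in hc N0 hexp *.
have An0 : A != 0 by rewrite fmorph_eq0.
have Bn0 : B != 0 by rewrite fmorph_eq0.
set al := A * x ^+ (n - 1) in N0 *.
set be := B * y ^+ (m - 2) in N0 *.
have aln0 : al != 0 by rewrite mulf_neq0 // expf_neq0.
have ben0 : be != 0 by rewrite mulf_neq0 // expf_neq0.
have hE k : (k < 5)%N -> al * hasse_mon x Y 3 k + be * hasse_mon x Y 2 k = (k == 0)%:R.
  move=> hk; rewrite -(hexp k) (@key L p A B x y Y n m k) //; lia.
have [h00 h01 h02 h03 h04] := @hm0 L x Y.
have [h10 h11 h12 h13 h14] := @hm1 L x Y.
have [h20 h21 h22 h23 h24] := @hm2 L x Y.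
have [h30 h31 h32 h33 h34] := @hm3 L x Y.
have [h40 h41 h42 h43 h44] := @hm4 L x Y.
have [h50 h51 h52 h53 h54] := @hm5 L x Y.
have e0 := hE 0%N isT; have e1 := hE 1%N isT; have e2 := hE 2%N isT;
have e3 := hE 3%N isT; have e4 := hE 4%N isT.
rewrite ?h20 ?h21 ?h22 ?h23 ?h24 ?h30 ?h31 ?h32 ?h33 ?h34 hY0 /= in e0 e1 e2 e3 e4.
have two0 : (2%:R : L) != 0.
  have ee := pcharf_eq hpL 2; rewrite !inE /= in ee.
  by rewrite ee; apply/eqP => ee2; rewrite -ee2 in p5.
split => //.
  apply/det0P => -[v vn0 hv].
  have cj j (hj : (j < 6)%N) := @colsum' L q x y Y v j hj.
  have c0 := cj 0%N isT; have c1 := cj 1%N isT; have c2 := cj 2%N isT;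
  have c3 := cj 3%N isT; have c4 := cj 4%N isT; have c5 := cj 5%N isT.
  rewrite hv !mxE in c0 c1 c2 c3 c4 c5.
  rewrite /= ?h00 ?h01 ?h02 ?h03 ?h04 ?h10 ?h11 ?h12 ?h13 ?h14 in c0 c1 c2 c3 c4 c5.
  rewrite ?h20 ?h21 ?h22 ?h23 ?h24 ?h30 ?h31 ?h32 ?h33 ?h34 in c0 c1 c2 c3 c4 c5.
  rewrite ?h40 ?h41 ?h42 ?h43 ?h44 ?h50 ?h51 ?h52 ?h53 ?h54 hY0 in c0 c1 c2 c3 c4 c5.
  pose w0 : L := v 0 (inord 0); rewrite -/w0 in c0 c1 c2 c3 c4 c5.
  pose w1 : L := v 0 (inord 1); rewrite -/w1 in c0 c1 c2 c3 c4 c5.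
  pose w2 : L := v 0 (inord 2); rewrite -/w2 in c0 c1 c2 c3 c4 c5.
  pose w3 : L := v 0 (inord 3); rewrite -/w3 in c0 c1 c2 c3 c4 c5.
  pose w4 : L := v 0 (inord 4); rewrite -/w4 in c0 c1 c2 c3 c4 c5.
  pose w5 : L := v 0 (inord 5); rewrite -/w5 in c0 c1 c2 c3 c4 c5.
  have Ew0 : v 0 (inord 0) = w0 by []. have Ew1 : v 0 (inord 1) = w1 by [].
  have Ew2 : v 0 (inord 2) = w2 by []. have Ew3 : v 0 (inord 3) = w3 by [].
  have Ew4 : v 0 (inord 4) = w4 by []. have Ew5 : v 0 (inord 5) = w5 by [].
  clearbody w0 w1 w2 w3 w4 w5.
  rewrite expr1n in c5.
  rewrite -exprM mulnC exprM in c0.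
  rewrite -exprM mulnC exprM in c2.
  rewrite -exprM mulnC exprM in N0.
  rewrite exprMn in c1.
  pose xq := x ^+ q; pose yq := y ^+ q.
  rewrite -/xq -/yq in c0 c1 c2 c3 c4 c5 N0.
  clearbody xq yq al be.
  have Z : w0 * (be * yq ^+ 2 + al * xq - 1) =
    ltac:(let d2 := dd c2 in let d3 := dd c3 in let d5 := dd c5 in
          let f0 := dd e0 in let f1 := dd e1 in let f2 := dd e2 in
          let f3 := dd e3 in let f4 := dd e4 in
          exact (- (be * d2 + al * d3 - d5) - w1 * f0 - w2 * f1 - w3 * f2
                 - w4 * f3 - w5 * f4)) by ring.

  have W1 : w1 = ltac:(let d := dd c5 in exact (- d - w0)) by ring.
  have W2 : w2 = ltac:(let d := dd c3 in exact (- d - w0 * xq - w1 * x)) by ring.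
  have W3 : w3 = ltac:(let d := dd c0 in
      exact (- d - w0 * xq ^+ 2 - w1 * x ^+ 2 - w2 * (2 * x))) by ring.
  have P4 : w4 * Y 3%N + w5 * Y 4%N = ltac:(let d := dd c4 in
      exact (- d - w0 * yq - w1 * y - w2 * Y 1%N - w3 * Y 2%N)) by ring.
  have Q4 : w4 * Y 2%N + w5 * Y 3%N = ltac:(let d1 := dd c1 in let d4 := dd c4 in
      exact (- d1 + x * d4 - w0 * (xq * yq - x * yq) - w1 * (x * y - x * y)
             - w2 * y - w3 * Y 1%N)) by ring.
  rewrite -c0 -c1 -c2 -c3 -c4 -c5 e0 e1 e2 e3 e4 in Z W1 W2 W3 P4 Q4.
  have w0z : w0 = 0.
    have Z' : w0 * (be * yq ^+ 2 + al * xq - 1) = 0 by rewrite Z; ring.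
    by move/eqP: Z'; rewrite mulf_eq0 (negbTE N0) orbF => /eqP.
  have w1z : w1 = 0 by rewrite W1 w0z; ring.
  have w2z : w2 = 0 by rewrite W2 w0z w1z; ring.
  have w3z : w3 = 0 by rewrite W3 w0z w1z w2z; ring.
  rewrite w0z w1z w2z w3z in P4 Q4.
  have {}P4 : w4 * Y 3%N + w5 * Y 4%N = 0 by rewrite P4; ring.
  have {}Q4 : w4 * Y 2%N + w5 * Y 3%N = 0 by rewrite Q4; ring.
  have S2 : 2 * y * Y 2%N + Y 1%N ^+ 2 = 0.
    by move/eqP: e2; rewrite mulr0 add0r mulf_eq0 (negbTE ben0) /= => /eqP.
  have S3 : 2 * y * Y 3%N + 2 * Y 1%N * Y 2%N = 0.
    by move/eqP: e3; rewrite mulr0 add0r mulf_eq0 (negbTE ben0) /= => /eqP.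
  have S4 : 2 * y * Y 4%N + 2 * Y 1%N * Y 3%N + Y 2%N ^+ 2 = 0.
    by move/eqP: e4; rewrite mulr0 add0r mulf_eq0 (negbTE ben0) /= => /eqP.
  have Y1n0 : Y 1%N != 0.
    apply/eqP => Y10; move: e1; rewrite Y10 !mulr0 addr0 mulr1 => al0.
    by move: aln0; rewrite al0 eqxx.
  have G : 16 * y ^+ 4 * (Y 2%N * Y 4%N - Y 3%N ^+ 2) - Y 1%N ^+ 6 =
    8 * y ^+ 3 * Y 2%N * (2 * y * Y 4%N + 2 * Y 1%N * Y 3%N + Y 2%N ^+ 2)
    + 8 * y ^+ 2 * Y 1%N * Y 2%N * (2 * y * Y 3%N + 2 * Y 1%N * Y 2%N)
    - 4 * y ^+ 2 * (2 * y * Y 3%N + 2 * Y 1%N * Y 2%N) ^+ 2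
    - (2 * y * Y 2%N + Y 1%N ^+ 2) ^+ 3
    + 3 * (2 * y * Y 2%N + Y 1%N ^+ 2) ^+ 2 * Y 1%N ^+ 2
    - 3 * (2 * y * Y 2%N + Y 1%N ^+ 2) * Y 1%N ^+ 4 by ring.
  rewrite S2 S3 S4 in G.
  have Dn0 : Y 2%N * Y 4%N - Y 3%N ^+ 2 != 0.
    apply/eqP => D0; rewrite D0 in G.
    have H6 : Y 1%N ^+ 6 = - (16 * y ^+ 4 * 0 - Y 1%N ^+ 6) + 16 * y ^+ 4 * 0 by ring.
    rewrite G in H6.
    have H6' : Y 1%N ^+ 6 = 0 by rewrite H6; ring.
    by move/eqP: H6'; rewrite expf_eq0 /= (negbTE Y1n0).
  have w4z : w4 = 0.
    have : w4 * (Y 2%N * Y 4%N - Y 3%N ^+ 2) =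
      Y 4%N * (w4 * Y 2%N + w5 * Y 3%N) - Y 3%N * (w4 * Y 3%N + w5 * Y 4%N) by ring.
    rewrite P4 Q4 !mulr0 subrr => /eqP; rewrite mulf_eq0 (negbTE Dn0) orbF => /eqP.
    done.
  have w5z : w5 = 0.
    have : w5 * (Y 2%N * Y 4%N - Y 3%N ^+ 2) =
      Y 2%N * (w4 * Y 3%N + w5 * Y 4%N) - Y 3%N * (w4 * Y 2%N + w5 * Y 3%N) by ring.
    rewrite P4 Q4 !mulr0 subrr => /eqP; rewrite mulf_eq0 (negbTE Dn0) orbF => /eqP.
    done.
  move/eqP: vn0; apply; apply/matrixP => i j; rewrite (ord1 i) mxE.
  rewrite -[j]inord_val; case: j => [[|[|[|[|[|[|//]]]]]] hj] /=.
  - by rewrite Ew0.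
  - by rewrite Ew1.
  - by rewrite Ew2.
  - by rewrite Ew3.
  - by rewrite Ew4.
  - by rewrite Ew5.
move=> nu' h1 h2 h3; exfalso; exact: lex_min h1 h2 h3.
Qed.
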